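(* Consider the one-dimensional hierarchical heavy hitter algorithm described in the context, with threshold $\phi$ and accuracy parameter $\epsilon$ such that $1/\epsilon$ is a positive integer and $\epsilon<\phi/2$, run on a nonempty stream ($N>0$). Let $P$ be the set of prefixes it outputs, and for each prefix $p$ let $F'_p=f_{\max}(p)-s_p$ (with $s_p$ the final value computed by the output procedure) be the estimated conditioned count and $F_p$ the conditioned count of $p$ with respect to $P$. Then $|P|\le\frac{1}{\phi-2\epsilon}$, and for every $p\in P$, $F'_p-F_p\le\frac{1}{\phi-2\epsilon}\,\epsilon N$.
   Context: Hierarchy: a rooted tree in which every leaf has depth $h$; nodes are prefixes, leaves are fully specified elements; $e\preceq p$ means $p$ is an ancestor of or equal to $e$, $e\prec p$ means additionally $e\neq p$; non-root prefixes have a parent $\mathrm{par}(p)$. Stream: updates $(e,c)$, $e$ fully specified, $c$ a positive integer; $f(e)$ is the total increment of $e$, $N=\sum_e f(e)$, and $f(p)=\sum_{e\preceq p}f(e)$ for a prefix $p$. For a set $P$ of prefixes and a prefix $p$, with $P_p=\{q\in P:q\prec p\}$, the conditioned count is $F_p=\sum f(e)$ over fully specified $e\preceq p$ with $e\not\preceq q$ for all $q\in P_p$. Space Saving with $m$ counters: maintains at most $m$ items with counters and error values; on $(i,c)$, a tracked $i$ has its counter increased by $c$; otherwise if fewer than $m$ items are tracked $i$ is added with counter $c$, error $0$; otherwise an item $j$ with the smallest counter is replaced by $i$ with counter $c(j)+c$ and error $c(j)$. Estimates: tracked $i$: $f_{\max}(i)=c(i)$, $f_{\min}(i)=c(i)-\mathrm{err}(i)$;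 untracked $i$: $f_{\min}(i)=0$, $f_{\max}(i)=$ smallest counter (or $0$ if fewer than $m$ items tracked). Algorithm: one Space Saving instance with $1/\epsilon$ counters per depth; on $(e,c)$ feed $(p,c)$ to the instance of $p$'s depth for every prefix $p$ with $e\preceq p$; $f_{\min}(p),f_{\max}(p)$ are that instance's estimates. Output procedure: set $s_e=0$ for all prefixes; process prefixes in postorder; for prefix $e$, if $f_{\max}(e)-s_e\ge\phi N$ put $e$ in $P$ and add $f_{\min}(e)$ to $s_{\mathrm{par}(e)}$, else add $s_e$ to $s_{\mathrm{par}(e)}$ (no parent update at the root). *)

(* Defs.v *)
From HB Require Import structures.
From mathcomp Require Import all_boot all_order all_algebra.
Set Implicit Arguments. Unset Strict Implicit. Unset Printing Implicit Defensive.
Import Order.TTheory GRing.Theory Num.Theory.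

(* Nodes are prefixes; leaves are the fully specified elements.        *)
(* par root = root is a dummy convention: the root has no parent.      *)
Record hierarchy (T : finType) := Hierarchy {
  h_root : T;
  h_par : T -> T;
  h_depth : T -> nat;
  h_height : nat;
  h_par_root : h_par h_root = h_root;
  h_depth_root : h_depth h_root = 0;
  h_depth0 : forall p, h_depth p = 0 -> p = h_root;
  h_depth_par : forall p, p != h_root -> h_depth (h_par p) = (h_depth p).-1;
  h_leaf_depth : forall p, (forall q, q != h_root -> h_par q != p) ->
                   h_depth p = h_height
}.

Section Hier.
Variables (T : finType) (H : hierarchy T).

Definition child (q p : T) : bool := (q != h_root H) && (h_par H q == p).

Definition is_leaf (p : T) : bool := [forall q, ~~ child q p].

Definition preceq (e p : T) : bool :=
  [exists k : 'I_(h_depth H e).+1, iter k (h_par H) e == p].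

Definition prec (e p : T) : bool := preceq e p && (e != p).

(* the (unique) prefix of depth d that is an ancestor of e (for d <= depth e) *)
Definition anc_at (d : nat) (e : T) : T := iter (h_depth H e - d) (h_par H) e.

Definition valid_stream (s : seq (T * nat)) : bool :=
  all (fun u => is_leaf u.1 && (0 < u.2)%N) s.

Definition freq (s : seq (T * nat)) (e : T) : nat := \sum_(u <- s | u.1 == e) u.2.
Definition stream_N (s : seq (T * nat)) : nat := \sum_(u <- s) u.2.

Definition cond_count (s : seq (T * nat)) (P : {set T}) (p : T) : nat :=
  \sum_(e | is_leaf e && preceq e p &&
            [forall q in P, prec q p ==> ~~ preceq e q]) freq s e.

(* stream fed to the Space Saving instance of depth d *)
Definition stream_at (d : nat) (s : seq (T * nat)) : seq (T * nat) :=
  [seq (anc_at d u.1, u.2) | u <- s].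

End Hier.

(* Space Saving with m counters. A state is a list of                  *)
(* (item, counter, error) triples. Ties for the smallest counter may   *)
(* be broken arbitrarily: we model the algorithm as a relation.        *)
Section SpaceSaving.
Variable (T : eqType).
Definition ss_state := seq (T * nat * nat).

Definition ss_items (st : ss_state) : seq T := [seq x.1.1 | x <- st].
Definition ss_counters (st : ss_state) : seq nat := [seq x.1.2 | x <- st].

Inductive ss_step (m : nat) : ss_state -> T * nat -> ss_state -> Prop :=
| ss_incr st i c : i \in ss_items st ->
    ss_step m st (i, c)
      [seq (if x.1.1 == i then (x.1.1, x.1.2 + c, x.2) else x) | x <- st]
| ss_add st i c : i \notin ss_items st -> (size st < m)%N ->
    ss_step m st (i, c) (rcons st (i, c, 0%N))
| ss_replace st i c j cj ej : i \notin ss_items st -> (m <= size st)%N ->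
    (j, cj, ej) \in st -> (forall x, x \in st -> (cj <= x.1.2)%N) ->
    ss_step m st (i, c)
      [seq (if x.1.1 == j then (i, cj + c, cj) else x) | x <- st].

Inductive ss_exec (m : nat) : ss_state -> seq (T * nat) -> ss_state -> Prop :=
| ss_exec_nil st : ss_exec m st [::] st
| ss_exec_cons st u s st' st'' :
    ss_step m st u st' -> ss_exec m st' s st'' -> ss_exec m st (u :: s) st''.

(* smallest counter (used only when the state is nonempty) *)
Definition ss_min_counter (st : ss_state) : nat :=
  foldr minn (head 0%N (ss_counters st)) (ss_counters st).

Definition ss_fmax (m : nat) (st : ss_state) (i : T) : nat :=
  match [seq x <- st | x.1.1 == i] with
  | x :: _ => x.1.2
  | [::] => if (size st < m)%N then 0%N else ss_min_counter st
  end.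

Definition ss_fmin (st : ss_state) (i : T) : nat :=
  match [seq x <- st | x.1.1 == i] with
  | x :: _ => x.1.2 - x.2
  | [::] => 0%N
  end.
End SpaceSaving.

(* The hierarchical algorithm: instance of depth d has final state     *)
(* st d; estimates of p come from instance of depth (depth p).         *)
Section Output.
Local Open Scope ring_scope.
Variables (R : realFieldType) (T : finType) (H : hierarchy T).
Variables (m : nat) (st : nat -> ss_state T) (phi : R) (N : nat).

Definition hfmax (p : T) : nat := ss_fmax m (st (h_depth H p)) p.
Definition hfmin (p : T) : nat := ss_fmin (st (h_depth H p)) p.

(* test performed when prefix q is processed, with current value sq of s_q *)
Definition passes (q : T) (sq : nat) : bool :=
  phi * N%:R <= (hfmax q)%:R - sq%:R.

(* value of s_p at the time p is processed in postorder (fuel n must be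
   at least the height of the subtree of p; #|T| always suffices) *)
Fixpoint s_fuel (n : nat) (p : T) : nat :=
  match n with
  | 0 => 0%N
  | n'.+1 => \sum_(q | child H q p)
               (let sq := s_fuel n' q in if passes q sq then hfmin q else sq)
  end.

Definition s_val (p : T) : nat := s_fuel #|T| p.

Definition output : {set T} := [set p | passes p (s_val p)].

Definition est_cond (p : T) : R := (hfmax p)%:R - (s_val p)%:R.
End Output.

(* Main.v *)
Require Import Defs.
From HB Require Import structures.
From mathcomp Require Import all_boot all_order all_algebra.
From mathcomp Require Import zify ring lra.
Import Order.TTheory GRing.Theory Num.Theory.
Set Implicit Arguments. Unset Strict Implicit.

Section Tree.
Variables (T : finType) (H : hierarchy T).
Local Notation par := (h_par H).
Local Notation dep := (h_depth H).
Local Notation root := (h_root H).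
Local Notation hh := (h_height H).

Lemma depth_par x : dep (par x) = (dep x).-1.
Proof.
have [->|nr] := eqVneq x root; first by rewrite h_par_root h_depth_root.
exact: h_depth_par.
Qed.

Lemma depth_iter k x : dep (iter k par x) = dep x - k.
Proof. elim: k => [|k IH]; first by rewrite subn0. by rewrite iterS depth_par IH subnS. Qed.

Lemma preceqE x q : preceq H x q = (iter (dep x - dep q) par x == q).
Proof.
apply/existsP/eqP.
  case=> k /eqP Hk.
  have hd : dep q = dep x - k by rewrite -Hk depth_iter.
  have hk : (k <= dep x)%N by rewrite -ltnS ltn_ord.
  by have -> : dep x - dep q = k by rewrite hd; lia.
move=> Hi.
have hl : (dep x - dep q < (dep x).+1)%N by rewrite ltnS leq_subr.
by exists (Ordinal hl); apply/eqP.
Qed.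

Lemma preceq_dep x q : preceq H x q -> (dep q <= dep x)%N.
Proof. by rewrite preceqE => /eqP <-; rewrite depth_iter leq_subr. Qed.

Lemma preceq_refl x : preceq H x x.
Proof. by rewrite preceqE subnn. Qed.

Lemma preceq_trans x c q : preceq H x c -> preceq H c q -> preceq H x q.
Proof.
move=> h1 h2; have d1 := preceq_dep h1; have d2 := preceq_dep h2.
move: h1 h2; rewrite !preceqE => /eqP h1 /eqP h2.
have -> : dep x - dep q = (dep c - dep q) + (dep x - dep c) by lia.
by rewrite iterD h1 h2.
Qed.

Lemma preceq_anti x q : preceq H x q -> preceq H q x -> x = q.
Proof.
move=> h1 h2; have d1 := preceq_dep h1; have d2 := preceq_dep h2.
move: h1; rewrite preceqE.
have -> : dep x - dep q = 0 by lia.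
by move/eqP.
Qed.

Lemma preceq_chain x r c : preceq H x r -> preceq H x c -> (dep c <= dep r)%N ->
  preceq H r c.
Proof.
move=> h1 h2 dcr; have d1 := preceq_dep h1; have d2 := preceq_dep h2.
move: h1 h2; rewrite !preceqE => /eqP h1 /eqP h2.
move: h2; have -> : dep x - dep c = (dep r - dep c) + (dep x - dep r) by lia.
by rewrite iterD h1 => ->.
Qed.

Lemma root_dep x : dep x = 0 -> x = root.
Proof. exact: h_depth0. Qed.

Lemma preceq_root x : preceq H x root.
Proof.
rewrite preceqE h_depth_root subn0; apply/eqP/root_dep.
by rewrite depth_iter subnn.
Qed.

Lemma child_dep c q : child H c q -> dep c = (dep q).+1.
Proof.
case/andP=> nr /eqP <-; rewrite (h_depth_par nr).
case E: (dep c) => [|n] //; by rewrite (root_dep E) eqxx in nr.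
Qed.

Lemma child_preceq c q : child H c q -> preceq H c q.
Proof.
move=> hc; rewrite preceqE (child_dep hc).
have -> : (dep q).+1 - dep q = 1 by lia.
by case/andP: hc.
Qed.

Lemma dep_le_height x : (dep x <= hh)%N.
Proof.
have hx : preceq H x x := preceq_refl x.
case: (@arg_maxnP _ _ (fun y => preceq H y x) dep hx) => y hy hmax.
have dy : dep y = hh; last by rewrite -dy; exact: preceq_dep hy.
apply: h_leaf_depth => q nq; apply/negP => /eqP hq.
have cq : child H q y by rewrite /child nq hq eqxx.
move: (hmax q (preceq_trans (child_preceq cq) hy)) => /=.
by rewrite (child_dep cq) ltnn.
Qed.

Lemma height_card : (hh < #|T|)%N.
Proof.
have hx : preceq H root root := preceq_refl root.
case: (@arg_maxnP _ _ (fun y => preceq H y root) dep (preceq_root root)) => y _ hmax.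
have dy : dep y = hh.
  apply: h_leaf_depth => q nq; apply/negP => /eqP hq.
  have cq : child H q y by rewrite /child nq hq eqxx.
  move: (hmax q (preceq_root q)) => /=.
  by rewrite (child_dep cq) ltnn.
have inj : injective (fun k : 'I_(dep y).+1 => iter k par y).
  move=> a b /(congr1 dep); rewrite !depth_iter => e.
  apply: val_inj => /=; have := ltn_ord a; have := ltn_ord b; lia.
by have := leq_card _ inj; rewrite card_ord dy.
Qed.

Lemma tree_ind (Pr : T -> Prop) :
  (forall q, (forall c, child H c q -> Pr c) -> Pr q) -> forall q, Pr q.
Proof.
move=> IH.
suff: forall n q, (hh - dep q < n)%N -> Pr q by move=> h q; apply: (h (hh - dep q).+1).
elim=> [//|n IHn] q hq; apply: IH => c hc; apply: IHn.
have := child_dep hc; have := dep_le_height c; lia.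
Qed.

Lemma big_desc (R : Type) (idx : R) (op : Monoid.com_law idx) (F : T -> R) q :
  \big[op/idx]_(x | preceq H x q) F x =
  op (F q) (\big[op/idx]_(c | child H c q) \big[op/idx]_(x | preceq H x c) F x).
Proof.
rewrite (bigD1 q) ?preceq_refl //=; congr (op _ _).
pose p x := iter (dep x - dep q).-1 par x.
rewrite (partition_big p (child H ^~ q)) /=.
  apply: eq_bigr => c hc; apply: eq_bigl => x.
  have dc := child_dep hc.
  apply/idP/idP.
    case/andP=> /andP [hx nx] /eqP <-.
    rewrite preceqE /p depth_iter.
    have d := preceq_dep hx.
    have ne : dep x != dep q.
      by apply: contra nx => /eqP e; move: hx; rewrite preceqE e subnn.
    by have -> : dep x - (dep x - (dep x - dep q).-1) = (dep x - dep q).-1 by lia.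
  move=> hx; have d := preceq_dep hx.
  rewrite (preceq_trans hx (child_preceq hc)) /=.
  apply/andP; split.
    by apply/eqP => e; move: d; rewrite dc e ltnn.
  apply/eqP; move: hx; rewrite preceqE /p => /eqP <-.
  by congr iter; rewrite dc; lia.
move=> x /andP [hx nx].
have d := preceq_dep hx.
have ne : dep x != dep q.
  by apply: contra nx => /eqP e; move: hx; rewrite preceqE e subnn.
have dpx : dep (p x) = (dep q).+1 by rewrite /p depth_iter; lia.
apply/andP; split.
  apply/eqP => e; move: dpx; rewrite e h_depth_root //.
rewrite /p -iterS; have -> : (dep x - dep q).-1.+1 = dep x - dep q by lia.
by move: hx; rewrite preceqE.
Qed.

Lemma big_descN (F : T -> nat) q :
  (\sum_(x | preceq H x q) F x = F q + \sum_(c | child H c q) \sum_(x | preceq H x c) F x)%N.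
Proof. exact: big_desc. Qed.

End Tree.

Section SS.
Variables (T0 : eqType) (k : nat).

Definition gfreq (str : seq (T0 * nat)) (i : T0) : nat := \sum_(u <- str | u.1 == i) u.2.
Definition Msum (str : seq (T0 * nat)) : nat := \sum_(u <- str) u.2.

Definition Inv (str : seq (T0 * nat)) (st : ss_state T0) : Prop :=
  [/\ uniq (ss_items st),
      sumn (ss_counters st) = Msum str,
      (forall x, x \in st -> gfreq str x.1.1 <= x.1.2 <= gfreq str x.1.1 + x.2
                             /\ k * x.2 <= Msum str) &
      (forall i, i \notin ss_items st ->
         (forall x, x \in st -> gfreq str i <= x.1.2) /\ (size st < k -> gfreq str i = 0))].

Lemma gfreq_rcons str i c j :
  gfreq (rcons str (i, c)) j = gfreq str j + (if i == j then c else 0).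
Proof. by rewrite /gfreq -cats1 big_cat big_cons big_nil /= addn0. Qed.

Lemma Msum_rcons str u : Msum (rcons str u) = Msum str + u.2.
Proof. by rewrite /Msum -cats1 big_cat big_cons big_nil /= addn0. Qed.

Lemma sum_upd (st : ss_state T0) (F : T0 * nat * nat -> T0 * nat * nat) y :
  uniq (ss_items st) -> y \in st -> (forall x, x.1.1 != y.1.1 -> F x = x) ->
  sumn (ss_counters (map F st)) + y.1.2 = sumn (ss_counters st) + (F y).1.2.
Proof.
elim: st => [//|x st IH] /=; rewrite inE => /andP [nx u] hy hF.
have [e|ne] := eqVneq x.1.1 y.1.1.
  have xy : x = y.
    case/orP: hy => [/eqP //|hy]; case/negP: nx; rewrite e.
    by apply/mapP; exists y.
  subst x.
  have -> : map F st = st.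
    elim: st nx {IH u hy} => [//|z st IH2] /=; rewrite inE negb_or => /andP [nz nst].
    by rewrite hF ?IH2 // eq_sym.
  rewrite /ss_counters /=; lia.
have hy' : y \in st by case/orP: hy => // /eqP ex; rewrite ex eqxx in ne.
rewrite hF //; have := IH u hy' hF; rewrite /ss_counters /=; lia.
Qed.

Lemma sumn_ge (cs : seq nat) m : (forall y, y \in cs -> m <= y) -> size cs * m <= sumn cs.
Proof.
elim: cs => [//|y cs IH] h /=.
have := h y (mem_head _ _); have := IH (fun z hz => h z (mem_behead (s := y :: cs) hz)); rewrite mulSn; lia.
Qed.

Lemma foldr_min a (cs : seq nat) :
  [/\ (forall y, y \in cs -> foldr minn a cs <= y), foldr minn a cs <= a &
      (foldr minn a cs == a) || (foldr minn a cs \in cs)].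
Proof.
elim: cs => [|y cs [h1 h2 h3]] /=; first by rewrite eqxx.
split.
- move=> z; rewrite inE => /orP [/eqP ->|hz]; first exact: geq_minl.
  exact: leq_trans (geq_minr _ _) (h1 z hz).
- exact: leq_trans (geq_minr _ _) h2.
- rewrite inE; case: (leqP y (foldr minn a cs)) => hl.
    by rewrite eqxx orbT.
  by case/orP: h3 => ->; rewrite ?orbT.
Qed.

Lemma counters_ge (st : ss_state T0) m : (forall x, x \in st -> m <= x.1.2) ->
  size st * m <= sumn (ss_counters st).
Proof.
move=> h; rewrite -(size_map (fun x : T0 * nat * nat => x.1.2)); apply: sumn_ge.
by move=> y /mapP [x hx ->]; apply: h.
Qed.

Lemma Inv_step str st u st' : Inv str st -> ss_step k st u st' -> Inv (rcons str u) st'.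
Proof.
move=> hI hstep; case: hstep hI => {st u st'}
  [st i c hi|st i c hi hsz|st i c j cj ej hi hsz hj hmin] [hu hs hc hn].
-
  set F := fun x : T0 * nat * nat => if x.1.1 == i then (x.1.1, x.1.2 + c, x.2) else x.
  have hit : ss_items (map F st) = ss_items st.
    rewrite /ss_items -map_comp; apply: eq_map => x /=; rewrite /F; by case: ifP.
  have hi' := hi.
  case/mapP: hi => [[[yi yc] ye] hy /= ey].
  split.
  + by rewrite hit.
  + rewrite Msum_rcons /= -hs.
    have hF : forall x, x.1.1 != (yi, yc, ye).1.1 -> F x = x by rewrite /F -ey => x /negbTE ->.
    have := sum_upd hu hy hF; rewrite /F -ey eqxx /=; lia.
  + move=> x' /mapP [[[xi xc] xe] hx ->]; rewrite !gfreq_rcons Msum_rcons /F /=.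
    have [/= h1 h2] := hc _ hx; case/andP: h1 => h1 h1'.
    case: (eqVneq xi i) => [e|ne] /=.
      rewrite e eqxx; rewrite e in h1 h1'; split; [apply/andP; split|]; lia.
    rewrite eq_sym (negbTE ne) /=; split; [apply/andP; split|]; lia.
  + move=> j; rewrite hit => hj; have [h1 h2] := hn j hj.
    have nij : (i == j) = false by apply/negbTE; apply: contraNneq hj => <-.
    rewrite !gfreq_rcons nij addn0 size_map; split => // x' /mapP [x hx ->].
    apply: leq_trans (h1 x hx) _; rewrite /F; case: ifP => //= _; exact: leq_addr.
-
  have hit : ss_items (rcons st (i, c, 0)) = rcons (ss_items st) i by rewrite /ss_items map_rcons.
  split.
  + by rewrite hit rcons_uniq hi hu.
  + by rewrite /ss_counters map_rcons -cats1 sumn_cat /= Msum_rcons hs /=; lia.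
  + move=> x; rewrite mem_rcons inE Msum_rcons => /orP [/eqP ->|hx] /=.
      rewrite gfreq_rcons eqxx (proj2 (hn i hi) hsz); split; [apply/andP; split|]; lia.
    case: x hx => [[xi xc] xe] hx.
    have [/= h1 h2] := hc _ hx; case/andP: h1 => h1 h1'.
    have nx : (i == xi) = false.
      by apply/negbTE; apply: contraNneq hi => ->; apply/mapP; exists (xi, xc, xe).
    rewrite gfreq_rcons nx addn0; split; [apply/andP; split|]; lia.
  + move=> j; rewrite hit mem_rcons inE negb_or => /andP [nj hj].
    have [h1 h2] := hn j hj.
    rewrite gfreq_rcons eq_sym (negbTE nj) addn0 size_rcons; split.
      move=> x; rewrite mem_rcons inE => /orP [/eqP ->|hx]; last exact: h1.
      by rewrite (h2 hsz).
    by move=> hs'; apply: h2; lia.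
-
  set G := fun x : T0 * nat * nat => if x.1.1 == j then (i, cj + c, cj) else x.
  set h := fun y : T0 => if y == j then i else y.
  have hit : ss_items (map G st) = map h (ss_items st).
    rewrite /ss_items -!map_comp; apply: eq_map => x /=; rewrite /G /h; by case: ifP.
  have iin : i \in ss_items (map G st).
    by apply/mapP; exists (G (j, cj, ej)); [apply: map_f | rewrite /G /= eqxx].
  have jin : j \in ss_items st by apply/mapP; exists (j, cj, ej).
  have [gi _] := hn i hi.
  have [hj1 _] := hc _ hj; case/andP: hj1 => /= hj1 _.
  have kcj : k * cj <= Msum str.
    rewrite -hs; apply: leq_trans (counters_ge hmin); by rewrite leq_mul2r hsz orbT.
  split.
  + rewrite hit map_inj_in_uniq // => y z hy hz; rewrite /h.
    case: (eqVneq y j) => [->|ny]; case: (eqVneq z j) => [->|nz] //.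
    * by move=> e; rewrite e hz in hi.
    * by move=> e; rewrite -e hy in hi.
  + rewrite Msum_rcons /= -hs.
    have hF : forall x, x.1.1 != (j, cj, ej).1.1 -> G x = x by rewrite /G => x /negbTE ->.
    have := sum_upd hu hj hF; rewrite /G /= eqxx /=; lia.
  + move=> x' /mapP [[[xi xc] xe] hx ->]; rewrite !gfreq_rcons Msum_rcons /G /=.
    case: (eqVneq xi j) => [e|ne] /=.
      rewrite eqxx; have := gi _ hj; rewrite /= => ?; split; [apply/andP; split|]; lia.
    have [/= h1 h2] := hc _ hx; case/andP: h1 => h1 h1'.
    have nx : (i == xi) = false.
      by apply/negbTE; apply: contraNneq hi => ->; apply/mapP; exists (xi, xc, xe).
    rewrite nx addn0; split; [apply/andP; split|]; lia.
  + move=> y hy.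
    have niy : (i == y) = false by apply/negbTE; apply: contraNneq hy => <-.
    rewrite gfreq_rcons niy addn0 size_map; split; last by lia.
    have hge : forall x', x' \in map G st -> cj <= x'.1.2.
      move=> x' /mapP [x hx ->]; rewrite /G; case: ifP => /= _; [lia | exact: hmin].
    case: (eqVneq y j) => [->|nyj].
      by move=> x' hx'; apply: leq_trans hj1 (hge _ hx').
    have hy' : y \notin ss_items st.
      apply: contra hy => hy'; rewrite hit; apply/mapP; exists y => //.
      by rewrite /h (negbTE nyj).
    have [g1 _] := hn y hy'.
    by move=> x' hx'; apply: leq_trans (g1 _ hj) (hge _ hx').
Qed.

Lemma Inv_nil : Inv [::] [::].
Proof.
split => //; first by rewrite /Msum big_nil.
by move=> i _; split => // _; rewrite /gfreq big_nil.
Qed.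

Lemma Inv_exec st rest st'' : ss_exec k st rest st'' ->
  forall pre, Inv pre st -> Inv (pre ++ rest) st''.
Proof.
elim=> [st0 pre|st0 u s0 st1 st2 hs _ IH pre] hI; first by rewrite cats0.
by rewrite -cat_rcons; apply: IH; apply: Inv_step hs.
Qed.

Lemma ss_final str st : 0 < k -> ss_exec k [::] str st -> forall i,
  [/\ ss_fmin st i <= gfreq str i, gfreq str i <= ss_fmax k st i,
      k * (ss_fmax k st i - gfreq str i) <= Msum str &
      k * (gfreq str i - ss_fmin st i) <= Msum str].
Proof.
move=> k0 he i; have [hu hs hc hn] := Inv_exec he Inv_nil.
rewrite /ss_fmax /ss_fmin.
case E: [seq x <- st | x.1.1 == i] => [|[[xi xc] xe] rest] /=.
  have hi : i \notin ss_items st.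
    apply/mapP => [[y hy ey]].
    have : y \in [seq x <- st | x.1.1 == i] by rewrite mem_filter hy -ey eqxx.
    by rewrite E.
  have [g1 g2] := hn i hi.
  case: ifP => hsz.
    rewrite (g2 hsz); split => //; lia.
  set cs := ss_counters st.
  have [m1 _ m3] := foldr_min (head 0 cs) cs.
  have csne : cs != [::].
    by rewrite -size_eq0 size_map; apply/eqP => e; rewrite e in hsz; move: hsz k0; lia.
  have mcs : ss_min_counter st \in cs.
    rewrite /ss_min_counter -/cs; case/orP: m3 => // /eqP ->.
    by case: (cs) csne => // a l _; rewrite mem_head.
  case/mapP: mcs => y hy ey.
  have gm : gfreq str i <= ss_min_counter st by rewrite ey; apply: g1.
  have km : k * ss_min_counter st <= Msum str.
    rewrite -hs; apply: leq_trans (counters_ge (m := ss_min_counter st) _).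
      by rewrite leq_mul2r; move/negbT: hsz; rewrite -leqNgt => ->; rewrite orbT.
    move=> x hx; apply: m1; exact: map_f.
  split => //.
    by apply: leq_trans km; rewrite leq_mul2l leq_subr orbT.
  by rewrite subn0; apply: leq_trans km; rewrite leq_mul2l gm orbT.
have hx : (xi, xc, xe) \in [seq x <- st | x.1.1 == i] by rewrite E mem_head.
move: hx; rewrite mem_filter /= => /andP [/eqP ei hx'].
have [/= h1 h2] := hc _ hx'; case/andP: h1; rewrite ei => h1 h1'.
split; [lia|lia|idtac|idtac].
  apply: leq_trans h2; rewrite leq_mul2l; apply/orP; right; lia.
apply: leq_trans h2; rewrite leq_mul2l; apply/orP; right; lia.
Qed.

End SS.

Section Main.
Variables (R : realFieldType) (T : finType) (H : hierarchy T) (k : nat)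
  (st : nat -> ss_state T) (phi : R) (N : nat).
Local Notation P := (output H k st phi N).
Local Notation sv := (s_val H k st phi N).
Local Notation fmx := (hfmax H k st).
Local Notation fmn := (hfmin H st).
Local Notation dep := (h_depth H).
Local Notation hh := (h_height H).

Definition tt q := if q \in P then fmn q else sv q.

Lemma no_child_top p c : (hh <= dep p)%N -> ~~ child H c p.
Proof.
move=> hp; apply/negP => hc; have := child_dep hc; have := dep_le_height H c; lia.
Qed.

Lemma s_fuel_stable n m p : (hh - dep p <= n)%N -> (hh - dep p <= m)%N ->
  s_fuel H k st phi N n p = s_fuel H k st phi N m p.
Proof.
elim: n p m => [|n IH] p m hn hm.
  have hp : (hh <= dep p)%N by lia.
  case: m hm => [//|m] _ /=; rewrite big1 // => c hc.
  by have := no_child_top c hp; rewrite hc.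
case: m hm => [|m] hm.
  have hp : (hh <= dep p)%N by lia.
  rewrite /= big1 // => c hc.
  by have := no_child_top c hp; rewrite hc.
rewrite /=; apply: eq_bigr => c hc.
have := child_dep hc; have := dep_le_height H c => h1 h2.
by rewrite (IH c m) //; lia.
Qed.

Lemma s_val_rec p : sv p = (\sum_(q | child H q p) tt q)%N.
Proof.
rewrite /tt /s_val; have := height_card H.
case E: #|T| => [//|n] hn /=.
apply: eq_bigr => c hc; rewrite inE /s_val E.
rewrite (s_fuel_stable (m := n.+1) (n := n)) //; lia.
Qed.

Lemma inP q : (q \in P) = passes H k st phi N q (sv q).
Proof. by rewrite inE. Qed.

Local Open Scope ring_scope.

Definition est p : R := (fmx p)%:R - (sv p)%:R.

Definition SP (q : T) (G : T -> R) := \sum_(p | preceq H p q) (if p \in P then G p else 0).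

Lemma SP_desc q G : SP q G = (if q \in P then G q else 0) + \sum_(c | child H c q) SP c G.
Proof. by rewrite /SP big_desc. Qed.

Lemma C_eq q : SP q est - (tt q)%:R = SP q (fun p => (fmx p)%:R - (fmn p)%:R).
Proof.
elim/(@tree_ind _ H): q => q IH.
rewrite !SP_desc.
have e1 : \sum_(c | child H c q) SP c (fun p => (fmx p)%:R - (fmn p)%:R)
        = \sum_(c | child H c q) SP c est - \sum_(c | child H c q) (tt c)%:R.
  by rewrite -sumrB; apply: eq_bigr => c hc; rewrite IH.
rewrite e1 /tt; have e2 := s_val_rec q; rewrite /tt in e2.
case: ifP => hq; rewrite /est e2 natr_sum; lra.
Qed.

Local Close Scope ring_scope.

Variable s : seq (T * nat).
Hypothesis hN : stream_N s = N.
Hypothesis hk : (0 < k)%N.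
Hypothesis hex : forall d, (d <= hh)%N -> ss_exec k [::] (stream_at H d s) (st d).

Definition w x := freq s x.
Definition fN q := (\sum_(x | preceq H x q) w x)%N.

Lemma fN_desc q : fN q = (w q + \sum_(c | child H c q) fN c)%N.
Proof. by rewrite /fN big_desc. Qed.

Lemma fN_stream q : fN q = (\sum_(u <- s | preceq H u.1 q) u.2)%N.
Proof.
rewrite (partition_big (fun u : T * nat => u.1) (preceq H ^~ q)) //.
apply: eq_bigr => x hx; rewrite /w /freq; apply: eq_bigl => u.
by case: (eqVneq u.1 x) => [->|_]; rewrite ?hx ?andbF.
Qed.

Lemma gfreq_stream q : gfreq (stream_at H (dep q) s) q = fN q.
Proof.
by rewrite fN_stream /gfreq /stream_at big_map; apply: eq_bigl => u; rewrite preceqE.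
Qed.

Lemma Msum_stream d : Msum (stream_at H d s) = N.
Proof. by rewrite /Msum /stream_at big_map -hN. Qed.

Lemma est_bounds q :
  [/\ fmn q <= fN q, fN q <= fmx q, k * (fmx q - fN q) <= N & k * (fN q - fmn q) <= N].
Proof.
have := ss_final hk (hex (dep_le_height H q)) q.
by rewrite gfreq_stream Msum_stream.
Qed.

Lemma t_le_f q : tt q <= fN q.
Proof.
elim/(@tree_ind _ H): q => q IH.
rewrite /tt; case: ifP => hq; first by case: (est_bounds q).
rewrite s_val_rec fN_desc; apply: leq_trans (leq_addl _ _).
exact: leq_sum.
Qed.

Lemma fN_root : fN (h_root H) = N.
Proof.
rewrite fN_stream -hN /stream_N; apply: eq_bigl => u; exact: preceq_root.
Qed.

Lemma prec_dep r p : preceq H r p -> r != p -> (dep p < dep r)%N.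
Proof.
move=> h ne; have d := preceq_dep h; rewrite ltn_neqAle d andbT.
apply: contra ne => /eqP e; by move: h; rewrite preceqE e subnn.
Qed.

Definition covb q x := [exists r in P, preceq H r q && preceq H x r].
Definition cov q := (\sum_(x | preceq H x q && covb q x) w x)%N.
Definition cnt q := (\sum_(r | preceq H r q) (if r \in P then 1 else 0))%N.

Lemma cnt_desc q : cnt q = ((if q \in P then 1 else 0) + \sum_(c | child H c q) cnt c)%N.
Proof. by rewrite /cnt big_desc. Qed.

Lemma covb_child q c x : q \notin P -> child H c q -> preceq H x c -> covb q x = covb c x.
Proof.
move=> nq hc hx; apply/existsP/existsP => [[r /andP [rP /andP [h1 h2]]]|[r /andP [rP /andP [h1 h2]]]].
  exists r; rewrite rP h2 andbT /=.
  apply: preceq_chain h2 hx _.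
  have ne : r != q by apply: contraNneq nq => <-.
  have := prec_dep h1 ne; rewrite (child_dep hc); lia.
exists r; rewrite rP h2 andbT /=; exact: preceq_trans h1 (child_preceq hc).
Qed.

Lemma covb_self q : q \notin P -> covb q q = false.
Proof.
move=> nq; apply/negbTE/existsP => [[r /andP [rP /andP [h1 h2]]]].
by move: rP; rewrite (preceq_anti h1 h2) (negbTE nq).
Qed.

Lemma cov_desc q : q \notin P -> cov q = (\sum_(c | child H c q) cov c)%N.
Proof.
move=> nq; rewrite /cov big_mkcondr big_descN covb_self // add0n.
apply: eq_bigr => c hc; rewrite big_mkcondr; apply: eq_bigr => x hx.
by rewrite (covb_child nq hc hx).
Qed.

Lemma cov_in q : q \in P -> cov q = fN q.
Proof.
move=> hq; rewrite /cov /fN; apply: eq_bigl => x; case hx: (preceq H x q) => //=.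
by apply/existsP; exists q; rewrite hq preceq_refl hx.
Qed.

Local Open Scope ring_scope.

Definition eps_def : R := (k%:R)^-1.

Lemma bound_sub a b : (b <= a)%N -> (k * (a - b) <= N)%N -> a%:R - b%:R <= eps_def * N%:R.
Proof.
move=> hab hk'; rewrite -natrB // mulrC ler_pdivlMr ?ltr0n //.
by rewrite -natrM ler_nat mulnC.
Qed.

Lemma eps_def_ge0 : 0 <= eps_def.
Proof. by rewrite /eps_def invr_ge0 ler0n. Qed.

Lemma K q : (cov q)%:R <= (tt q)%:R + eps_def * N%:R * (cnt q)%:R.
Proof.
have eN : 0 <= eps_def * N%:R by rewrite mulr_ge0 ?eps_def_ge0 ?ler0n.
elim/(@tree_ind _ H): q => q IH.
case hq: (q \in P).
  rewrite cov_in // /tt hq.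
  have [b1 b2 b3 b4] := est_bounds q.
  have := bound_sub b1 b4.
  have : eps_def * N%:R <= eps_def * N%:R * (cnt q)%:R.
    apply: ler_peMr => //; rewrite ler1n cnt_desc hq; lia.
  lra.
have nq : q \notin P by rewrite hq.
rewrite cov_desc // /tt hq s_val_rec cnt_desc hq add0n !natr_sum mulr_sumr -big_split /=.
apply: ler_sum => c hc; exact: IH.
Qed.

Local Close Scope ring_scope.

Lemma cc_eq p : valid_stream H s ->
  (cond_count H s P p + \sum_(c | child H c p) cov c)%N = fN p.
Proof.
move=> hv.
have w0 : forall e, ~~ is_leaf H e -> w e = 0.
  move=> e ne; rewrite /w /freq big1_seq // => u /andP [/eqP eu hu].
  move/allP: hv => /(_ u hu) /andP [hl _]; by move: hl; rewrite eu (negbTE ne).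
set condf := fun e => [forall q in P, prec H q p ==> ~~ preceq H e q].
have e1 : cond_count H s P p = (\sum_(e | preceq H e p) (if condf e then w e else 0))%N.
  rewrite /cond_count -big_mkcondr [LHS]big_mkcond [RHS]big_mkcond /=; apply: eq_bigr => e _.
  case hl: (is_leaf H e) => //=; case: ifP => // _; symmetry; by apply: w0; rewrite hl.
have cp : condf p.
  apply/forallP => q; apply/implyP => _; apply/implyP => /andP [hqp nqp].
  by apply/negP => hpq; rewrite (preceq_anti hqp hpq) eqxx in nqp.
rewrite e1 big_descN cp fN_desc -addnA; congr (_ + _)%N.
rewrite -big_split /=; apply: eq_bigr => c hc.
rewrite /cov big_mkcondr /fN -big_split /=; apply: eq_bigr => x hx.
have -> : condf x = ~~ covb c x.
  have dc := child_dep hc.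
  apply/idP/idP.
    move=> /forallP hf; apply/negP => /existsP [r /andP [rP /andP [h1 h2]]].
    have := hf r; rewrite rP /= => /implyP hh'.
    have hpr : prec H r p.
      rewrite /prec (preceq_trans h1 (child_preceq hc)) /=.
      apply/eqP => e; have := preceq_dep h1; rewrite e dc; lia.
    by move: (hh' hpr); rewrite h2.
  move=> nc; apply/forallP => q; apply/implyP => qP; apply/implyP => /andP [hqp nqp].
  apply/negP => hxq; apply: (negP nc); apply/existsP; exists q; rewrite qP hxq andbT /=.
  apply: preceq_chain hxq hx _; have := prec_dep hqp nqp; rewrite dc; lia.
by case: (covb c x); rewrite /= ?add0n ?addn0.
Qed.

Lemma cnt_le q : (cnt q <= #|P|)%N.
Proof.
rewrite /cnt -sum1_card big_mkcond [X in (_ <= X)%N]big_mkcond /=.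
by apply: leq_sum => r _; case: (preceq H r q); case: (r \in P).
Qed.

Local Open Scope ring_scope.

Lemma SP_root G : SP (h_root H) G = \sum_(p in P) G p.
Proof.
rewrite /SP [RHS]big_mkcond /=; apply: eq_bigl => p; exact: preceq_root.
Qed.

Lemma fmx_fmn q : (fmx q)%:R - (fmn q)%:R <= 2 * (eps_def * N%:R).
Proof.
have [b1 b2 b3 b4] := est_bounds q.
have := bound_sub b2 b3; have := bound_sub b1 b4; lra.
Qed.

Lemma part1 : (0 < N)%N -> eps_def < phi / 2 -> #|P|%:R <= (phi - 2 * eps_def)^-1.
Proof.
move=> N0 hphi.
have dpos : 0 < phi - 2 * eps_def by lra.
have h1 := C_eq (h_root H); rewrite !SP_root in h1.
have lo : #|P|%:R * (phi * N%:R) <= \sum_(p in P) est p.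
  rewrite mulr_natl -sumr_const; apply: ler_sum => p; rewrite inE.
  by rewrite /passes /est.
have hi : \sum_(p in P) ((fmx p)%:R - (fmn p)%:R) <= #|P|%:R * (2 * (eps_def * N%:R)).
  rewrite mulr_natl -sumr_const; apply: ler_sum => p _; exact: fmx_fmn.
have tr : (tt (h_root H))%:R <= N%:R :> R.
  by rewrite ler_nat -(fN_root) t_le_f.
rewrite -div1r ler_pdivlMr //.
have Npos : 0 < N%:R :> R by rewrite ltr0n.
rewrite -(ler_pM2r Npos) mul1r.
have e : #|P|%:R * (phi - 2 * eps_def) * N%:R
       = #|P|%:R * (phi * N%:R) - #|P|%:R * (2 * (eps_def * N%:R)) :> R by ring.
rewrite e; lra.
Qed.

Lemma part2 p : valid_stream H s -> p \in P ->
  est p - (cond_count H s P p)%:R <= eps_def * N%:R * #|P|%:R.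
Proof.
move=> hv hp.
have eN : 0 <= eps_def * N%:R by rewrite mulr_ge0 ?eps_def_ge0 ?ler0n.
have ce := congr1 (fun n : nat => n%:R : R) (cc_eq p hv); rewrite /= natrD natr_sum in ce.
have es : (sv p)%:R = \sum_(c | child H c p) (tt c)%:R :> R by rewrite s_val_rec natr_sum.
have hK : \sum_(c | child H c p) (cov c)%:R <=
          \sum_(c | child H c p) (tt c)%:R + eps_def * N%:R * \sum_(c | child H c p) (cnt c)%:R :> R.
  rewrite mulr_sumr -big_split /=; apply: ler_sum => c _; exact: K.
have cn : (cnt p)%:R = 1 + \sum_(c | child H c p) (cnt c)%:R :> R.
  by rewrite cnt_desc hp natrD natr_sum.
have [b1 b2 b3 b4] := est_bounds p.
have bf := bound_sub b2 b3.
have hc : eps_def * N%:R * (cnt p)%:R <= eps_def * N%:R * #|P|%:R.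
  by apply: ler_wpM2l => //; rewrite ler_nat cnt_le.
have e2 : eps_def * N%:R * (cnt p)%:R = eps_def * N%:R + eps_def * N%:R * \sum_(c | child H c p) (cnt c)%:R.
  by rewrite cn; ring.
rewrite /est es; lra.
Qed.

End Main.
Unset Implicit Arguments. Set Strict Implicit.
Local Open Scope ring_scope.

Theorem theorem3 (R : realFieldType) (T : finType) (H : hierarchy T)
  (phi eps : R) (k : nat) (s : seq (T * nat)) (st : nat -> ss_state T) :
  (0 < k)%N -> eps = (k%:R)^-1 -> eps < phi / 2 ->
  valid_stream H s -> (0 < stream_N s)%N ->
  (forall d, (d <= h_height H)%N -> ss_exec k [::] (stream_at H d s) (st d)) ->
  let N := stream_N s in
  let P := output H k st phi N in
  (#|P|%:R <= (phi - 2 * eps)^-1) /\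
  (forall p, p \in P ->
     est_cond H k st phi N p - (cond_count H s P p)%:R
       <= (phi - 2 * eps)^-1 * eps * N%:R).
Proof.
move=> hk heps hphi hv hN0 hex N P.
have p1 : #|P|%:R <= (phi - 2 * eps)^-1.
  by rewrite heps; apply: (part1 (s := s) (erefl _) hk hex hN0); rewrite /eps_def -heps.
split => // p hp.
have := part2 (phi := phi) (s := s) (erefl _) hk hex hv hp.
rewrite /eps_def -heps => h.
apply: le_trans h _.
have eN : 0 <= eps * N%:R by rewrite heps mulr_ge0 ?invr_ge0 ?ler0n.
have -> : (phi - 2 * eps)^-1 * eps * N%:R = eps * N%:R * (phi - 2 * eps)^-1 by ring.
exact: ler_wpM2l.
Qed.
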